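(* Let $m\ge1$, $n\ge1$, $N>2n$, and let $\mathbf y$ be a stationary reciprocal process of order $n$ on $\mathbb Z_N$. For each $t$, write $\hat{\mathbb E}[\mathbf y(t)\mid \mathbf y(s),s\ne t]=-\sum_{k=-n,\,k\ne0}^{n}F_k(t)\,\mathbf y(t-k)$ (such a representation exists by reciprocity). Then the coefficient matrices $F_k(t)\in\mathbb R^{m\times m}$ can be taken independent of $t$; and if $\mathbf y$ is full rank, they are uniquely determined, do not depend on $t$, and are determined by the covariance lags $\Sigma_0,\Sigma_1,\dots,\Sigma_{2n}$ of the process.
   Context: A process on $\mathbb Z_N$ is a zero-mean second-order $\mathbb R^m$-valued process $\{\mathbf y(t)\}_{t=1}^N$, time indices taken modulo $N$, whose covariance $\boldsymbol\Sigma_N=\mathbb E\,\mathbf y\mathbf y^\top$ is symmetric block-circulant (its $(i,j)$ block depends only on $(i-j)\bmod N$); it is then stationary with lags $\Sigma_k=\mathbb E\,\mathbf y(t+k)\mathbf y(t)^\top$. It is full rank if $\boldsymbol\Sigma_N>0$. $\hat{\mathbb E}[\cdot\mid\cdot]$ is orthogonal projection onto the closed linear span of the scalar components of the conditioning variables. Subspaces $\mathcal A,\mathcal B$ are conditionally orthogonal given $\mathcal C$ if $a-\hat{\mathbb E}[a\mid\mathcal C]$ and $b-\hat{\mathbb E}[b\mid\mathcal C]$ are uncorrelated for all $a\in\mathcal A$, $b\in\mathcal B$. The process is reciprocal of order $n$ if for every cyclic interval $(t_1,t_2)$ the variables $\{\mathbf y(t):t\in(t_1,t_2)\}$ are conditionally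 orthogonal to $\{\mathbf y(s):s\notin(t_1,t_2)\}$ given $\mathbf y(t_1-n+1),\dots,\mathbf y(t_1),\mathbf y(t_2),\dots,\mathbf y(t_2+n-1)$; in particular $\hat{\mathbb E}[\mathbf y(t)\mid\mathbf y(s),s\ne t]=\hat{\mathbb E}[\mathbf y(t)\mid \mathbf y(t-n),\dots,\mathbf y(t-1),\mathbf y(t+1),\dots,\mathbf y(t+n)]$. *)

(* Defs.v *)
(* Second-order processes are modelled in the abstract
   Hilbert-space (L^2) setting: random variables are vectors of a real
   vector space H equipped with the covariance (semi-)inner product
   ip x y = E[x y]. *)
From HB Require Import structures.
From mathcomp Require Import all_boot all_order all_algebra.
Set Implicit Arguments. Unset Strict Implicit. Unset Printing Implicit Defensive.
Import Order.TTheory GRing.Theory Num.Theory.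
Local Open Scope ring_scope.

Definition semi_inner (R : numDomainType) (H : lmodType R) (ip : H -> H -> R) : Prop :=
  [/\ forall (a : R) (x y z : H), ip (a *: x + y) z = a * ip x z + ip y z,
      forall x y : H, ip x y = ip y x &
      forall x : H, 0 <= ip x x].

Section Process.
Variables (R : numDomainType) (H : lmodType R) (ip : H -> H -> R).
Variables (m N : nat).
(* the process: y t i is the i-th scalar component of y(t), t in Z_N *)
Variable y : 'Z_N -> 'I_m -> H.

(* v lies in the (closed = finite-dimensional) linear span of the scalar
   components of y(s), s in A *)
Definition in_span (A : {set 'Z_N}) (v : H) : Prop :=
  exists c : 'Z_N -> 'I_m -> R, v = \sum_(s in A) \sum_(i < m) c s i *: y s i.

(* p is the orthogonal projection  hatE[x | y(s), s in A] *)
Definition is_proj (A : {set 'Z_N}) (x p : H) : Prop :=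
  in_span A p /\ (forall s, s \in A -> forall i : 'I_m, ip (x - p) (y s i) = 0).

Definition cond_orth (A B C : {set 'Z_N}) : Prop :=
  forall a b pa pb, in_span A a -> in_span B b ->
    is_proj C a pa -> is_proj C b pb -> ip (a - pa) (b - pb) = 0.

Definition stationary : Prop :=
  forall (s t k : 'Z_N) (i j : 'I_m),
    ip (y (s + k) i) (y s j) = ip (y (t + k) i) (y t j).

Definition Sigma (k : int) : 'M[R]_m :=
  \matrix_(i, j) ip (y (k%:~R) i) (y 0 j).

(* full rank: Sigma_N > 0, i.e. c^T Sigma_N c > 0 for every c <> 0 *)
Definition full_rank : Prop :=
  forall c : 'Z_N -> 'I_m -> R, (exists s i, c s i != 0) ->
    0 < \sum_(s : 'Z_N) \sum_(i < m) \sum_(t : 'Z_N) \sum_(j < m)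
          c s i * ip (y s i) (y t j) * c t j.

(* open cyclic interval (t1, t2) = {t1+1, ..., t2-1} (mod N) *)
Definition cyc_open (t1 t2 : 'Z_N) : {set 'Z_N} :=
  [set s : 'Z_N | (0 < val (s - t1)%R < val (t2 - t1)%R)%N].

(* the boundary t1-n+1, ..., t1, t2, ..., t2+n-1 *)
Definition cyc_bdry (n : nat) (t1 t2 : 'Z_N) : {set 'Z_N} :=
  [set s : 'Z_N | [exists k : 'I_n,
     (s == t1 - (val k)%:R) || (s == t2 + (val k)%:R)]].

Definition reciprocal (n : nat) : Prop :=
  forall t1 t2 : 'Z_N,
    cond_orth (cyc_open t1 t2) (~: cyc_open t1 t2) (cyc_bdry n t1 t2).

Definition represents (n : nat) (F : int -> 'M[R]_m) (t : 'Z_N) : Prop :=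
  forall i : 'I_m,
    is_proj [set s | s != t] (y t i)
      (- \sum_(1 <= k < n.+1) \sum_(j < m)
           (F (k%:Z) i j *: y (t - (k%:Z)%:~R) j
            + F (- (k%:Z)) i j *: y (t + (k%:Z)%:~R) j)).

End Process.

(* Main.v *)
Require Import Defs.
From HB Require Import structures.
From mathcomp Require Import all_boot all_order all_algebra.
From mathcomp Require Import reals.
From mathcomp Require Import ring lra zify.
From Stdlib Require Import ClassicalEpsilon.
Set Implicit Arguments. Unset Strict Implicit.
Import Order.TTheory GRing.Theory Num.Theory.
Local Open Scope ring_scope.

Section IP.
Variables (R : realType) (H : lmodType R) (ip : H -> H -> R).
Hypothesis hip : semi_inner ip.

Lemma ipDl x y z : ip (x + y) z = ip x z + ip y z.
Proof. by case: hip => h _ _; have := h 1 x y z; rewrite scale1r mul1r. Qed.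
Lemma ip0l z : ip 0 z = 0.
Proof.
have h := ipDl 0 0 z; rewrite addr0 -{1}[ip 0 z]addr0 in h.
by rewrite (addrI _ h).
Qed.
Lemma ipZl a x z : ip (a *: x) z = a * ip x z.
Proof. by case: hip => h _ _; have := h a x 0 z; rewrite addr0 ip0l addr0. Qed.
Lemma ipNl x z : ip (- x) z = - ip x z.
Proof. by rewrite -scaleN1r ipZl mulN1r. Qed.
Lemma ipBl x y z : ip (x - y) z = ip x z - ip y z.
Proof. by rewrite ipDl ipNl. Qed.
Lemma ipC x y : ip x y = ip y x.
Proof. by case: hip. Qed.
Lemma ipDr x y z : ip z (x + y) = ip z x + ip z y.
Proof. by rewrite ipC ipDl !(ipC z). Qed.
Lemma ipZr a x z : ip z (a *: x) = a * ip z x.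
Proof. by rewrite ipC ipZl ipC. Qed.
Lemma ip0r z : ip z 0 = 0.
Proof. by rewrite ipC ip0l. Qed.
Lemma ipNr x z : ip z (- x) = - ip z x.
Proof. by rewrite ipC ipNl ipC. Qed.
Lemma ipBr x y z : ip z (x - y) = ip z x - ip z y.
Proof. by rewrite ipDr ipNr. Qed.
Lemma ip_suml (I : Type) (r : seq I) (P : pred I) (F : I -> H) z :
  ip (\sum_(i <- r | P i) F i) z = \sum_(i <- r | P i) ip (F i) z.
Proof. exact: (big_morph (fun x => ip x z) (fun x y => ipDl x y z) (ip0l z)). Qed.
Lemma ip_sumr (I : Type) (r : seq I) (P : pred I) (F : I -> H) z :
  ip z (\sum_(i <- r | P i) F i) = \sum_(i <- r | P i) ip z (F i).
Proof. exact: (big_morph (fun x => ip z x) (fun x y => ipDr x y z) (ip0r z)). Qed.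

Lemma ip_self0 w z : ip w w = 0 -> ip z w = 0.
Proof.
move=> hw; apply/eqP; apply/negPn/negP => hb.
set b := ip z w in hb.
set a := - (ip z z + 1) / (2 * b).
have ab : a * b = - (ip z z + 1) / 2.
  rewrite /a; field; rewrite hb /=; done.
case: hip => _ _ hge.
have := hge (z + a *: w).
rewrite !ipDl !ipDr !ipZl !ipZr hw.
rewrite !mulr0 addr0 (ipC w z) -/b ab.
lra.
Qed.

Lemma orth_sum (I : finType) (f : I -> H) (P : pred I) (c : I -> R) v :
  (forall j, P j -> ip v (f j) = 0) -> ip v (\sum_(i | P i) c i *: f i) = 0.
Proof.
move=> h; rewrite ip_sumr big1 // => i hi; by rewrite ipZr h // mulr0.
Qed.

Lemma proj_ex (I : finType) (f : I -> H) (A : {set I}) (x : H) :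
  exists c : I -> R, forall j, j \in A ->
    ip (x - \sum_(i in A) c i *: f i) (f j) = 0.
Proof.
move: {2}#|A| (leqnn #|A|) => k; elim: k A x => [|k IH] A x hA.
  exists (fun _ => 0) => j hj; move: hA; rewrite leqn0 => /eqP/cards0_eq hA0.
  by rewrite hA0 in_set0 in hj.
case: (set_0Vmem A) => [->|[a ha]].
  by exists (fun _ => 0) => j; rewrite in_set0.
set A' := A :\ a.
have hA' : (#|A'| <= k)%N by move: hA; rewrite (cardsD1 a A) ha.
have [c1 h1] := IH A' x hA'; have [c2 h2] := IH A' (f a) hA'.
set p1 := \sum_(i in A') c1 i *: f i in h1.
set q := \sum_(i in A') c2 i *: f i in h2.
set w := f a - q in h2.
have sumA : forall c : I -> R, \sum_(i in A) c i *: f i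
    = c a *: f a + \sum_(i in A') c i *: f i.
  move=> c; rewrite (bigD1 a) //=; congr (_ + _); apply: eq_bigl => i.
  by rewrite in_setD1 andbC.
have orthq : forall v, (forall j, j \in A' -> ip v (f j) = 0) -> ip v q = 0.
  by move=> v hv; apply: orth_sum.
have fa : f a = w + q by rewrite /w subrK.
case: (eqVneq (ip w w) 0) => hw.
  exists (fun i => if i == a then 0 else c1 i).
  have -> : \sum_(i in A) (if i == a then 0 else c1 i) *: f i = p1.
    rewrite sumA eqxx scale0r add0r; apply: eq_bigr => i.
    by rewrite in_setD1 => /andP[/negbTE -> _].
  move=> j hj; case: (eqVneq j a) => [->|hja].
    by rewrite fa ipDr (@ip_self0 w _ hw) add0r orthq.
  by apply: h1; rewrite in_setD1 hja hj.
set al := ip (x - p1) w / ip w w.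
exists (fun i => if i == a then al else c1 i - al * c2 i).
have -> : \sum_(i in A) (if i == a then al else c1 i - al * c2 i) *: f i
    = p1 + al *: w.
  rewrite sumA eqxx.
  rewrite (eq_bigr (fun i => c1 i *: f i - al *: (c2 i *: f i))); last first.
    by move=> i; rewrite in_setD1 => /andP[/negbTE -> _]; rewrite scalerBl scalerA.
  rewrite sumrB -scaler_sumr -/p1 -/q /w scalerBr.
  by rewrite addrCA.
have key : ip (x - (p1 + al *: w)) w = 0.
  by rewrite opprD addrA ipDl ipNl ipZl /al divfK // subrr.
have orthA' : forall j, j \in A' -> ip (x - (p1 + al *: w)) (f j) = 0.
  move=> j hj; rewrite opprD addrA ipDl ipNl ipZl h1 // h2 //.
  by rewrite mulr0 oppr0 addr0.
move=> j hj; case: (eqVneq j a) => [->|hja].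
  by rewrite fa ipDr key orthq // add0r.
by apply: orthA'; rewrite in_setD1 hja hj.
Qed.

End IP.

Section Proc.
Variables (R : realType) (H : lmodType R) (ip : H -> H -> R).
Hypothesis hip : semi_inner ip.
Variables (m N n : nat) (y : 'Z_N -> 'I_m -> H).
Hypothesis hN : (2 * n.+1 < N)%N.
Hypothesis hst : stationary ip y.

Lemma N1 : (1 < N)%N. Proof. lia. Qed.

Definition wsum (G : int -> 'M[R]_m) (t : 'Z_N) (i : 'I_m) : H :=
  \sum_(1 <= k < n.+2) \sum_(j < m)
     (G (k%:Z) i j *: y (t - (k%:Z)%:~R) j + G (- (k%:Z)) i j *: y (t + (k%:Z)%:~R) j).

Lemma shift t a b i j : ip (y (t + a) i) (y (t + b) j) = ip (y a i) (y b j).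
Proof.
have := hst (t + b) b (a - b) i j.
have e1 : t + b + (a - b) = t + a by ring.
have e2 : b + (a - b) = a by ring.
by rewrite e1 e2.
Qed.

Lemma wsum_ip G t i z : ip (y t i + wsum G t i) z = ip (y t i) z +
  \sum_(1 <= k < n.+2) \sum_(j < m) (G (k%:Z) i j * ip (y (t - (k%:Z)%:~R) j) z
     + G (- (k%:Z)) i j * ip (y (t + (k%:Z)%:~R) j) z).
Proof.
rewrite (ipDl hip) /wsum (ip_suml hip); congr (_ + _); apply: eq_bigr => k _.
rewrite (ip_suml hip); apply: eq_bigr => j _.
by rewrite (ipDl hip) !(ipZl hip).
Qed.

Lemma wsum_shift G t i a j : ip (y t i + wsum G t i) (y (t + a) j)
   = ip (y 0 i + wsum G 0 i) (y a j).
Proof.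
rewrite !wsum_ip; congr (_ + _).
  by have := shift t 0 a i j; rewrite addr0.
apply: eq_bigr => k _; apply: eq_bigr => j' _.
by rewrite (shift t (- _) a) sub0r (shift t _ a) add0r.
Qed.

Lemma znat_eq a b : (a < N)%N -> (b < N)%N -> ((a%:R : 'Z_N) == b%:R) = (a == b).
Proof.
move=> ha hb; apply/eqP/eqP => [|->//].
by rewrite !Zp_nat => /(congr1 val) /=; rewrite (Zp_cast N1) !modn_small.
Qed.

Lemma znat_val a : (a < N)%N -> val (a%:R : 'Z_N) = a.
Proof. by move=> ha; rewrite Zp_nat /= (Zp_cast N1) modn_small. Qed.

Lemma znat_neq0 a : (0 < a < N)%N -> (a%:R : 'Z_N) != 0.
Proof.
move=> /andP[h0 h1]; have := @znat_eq a 0 h1 (ltn_trans h0 h1).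
by rewrite mulr0n => ->; rewrite -lt0n.
Qed.

Lemma win_mm (t : 'Z_N) a b : (a < N)%N -> (b < N)%N ->
  (t - a%:R == t - b%:R) = (a == b).
Proof. by move=> ha hb; rewrite (inj_eq (addrI t)) eqr_opp znat_eq. Qed.

Lemma win_pp (t : 'Z_N) a b : (a < N)%N -> (b < N)%N ->
  (t + a%:R == t + b%:R) = (a == b).
Proof. by move=> ha hb; rewrite (inj_eq (addrI t)) znat_eq. Qed.

Lemma win_mp (t : 'Z_N) a b : (0 < a + b < N)%N -> (t - a%:R == t + b%:R) = false.
Proof.
move=> h; rewrite (inj_eq (addrI t)) eq_sym -addr_eq0 -natrD; apply/negbTE/znat_neq0.
by rewrite addnC.
Qed.

Lemma win_m0 (t : 'Z_N) a : (0 < a < N)%N -> (t - a%:R == t) = false.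
Proof.
move=> h; rewrite -{2}[t]addr0 (inj_eq (addrI t)) oppr_eq0; exact/negbTE/znat_neq0.
Qed.

Lemma win_p0 (t : 'Z_N) a : (0 < a < N)%N -> (t + a%:R == t) = false.
Proof.
move=> h; rewrite -{2}[t]addr0 (inj_eq (addrI t)); exact/negbTE/znat_neq0.
Qed.

Definition gc (G : int -> 'M[R]_m) (t : 'Z_N) (i : 'I_m) (s : 'Z_N) (j : 'I_m) : R := \sum_(1 <= k < n.+2)
  ((s == t - (k%:Z)%:~R)%:R * G (k%:Z) i j + (s == t + (k%:Z)%:~R)%:R * G (- (k%:Z)) i j).

Lemma pick_sum (A : {set 'Z_N}) u (g : 'Z_N -> H) (r : R) : u \in A ->
  \sum_(s in A) ((s == u)%:R * r) *: g s = r *: g u.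
Proof.
move=> hu; rewrite (bigD1 u) //= eqxx mul1r big1 ?addr0 // => s /andP[_ /negbTE ->].
by rewrite mul0r scale0r.
Qed.

Lemma gather (A : {set 'Z_N}) G t i :
  (forall k, (1 <= k < n.+2)%N -> (t - (k%:Z)%:~R \in A) && (t + (k%:Z)%:~R \in A)) ->
  \sum_(s in A) \sum_(j < m) gc G t i s j *: y s j = wsum G t i.
Proof.
move=> hA; rewrite /wsum.
transitivity (\sum_(s in A) \sum_(j < m) \sum_(1 <= k < n.+2)
   (((s == t - (k%:Z)%:~R)%:R * G (k%:Z) i j) *: y s j
    + ((s == t + (k%:Z)%:~R)%:R * G (- (k%:Z)) i j) *: y s j)).
  apply: eq_bigr => s _; apply: eq_bigr => j _; rewrite /gc scaler_suml.
  by apply: eq_bigr => k _; rewrite scalerDl.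
rewrite exchange_big /=; under eq_bigr do rewrite exchange_big /=.
rewrite exchange_big /=.
apply: eq_big_nat => k hk; apply: eq_bigr => j _.
by case/andP: (hA k hk) => h1 h2; rewrite big_split /= !pick_sum.
Qed.

Lemma span_orth (A : {set 'Z_N}) v w : (forall s, s \in A -> forall j, ip v (y s j) = 0) ->
  in_span y A w -> ip v w = 0.
Proof.
move=> h [c ->]; rewrite (ip_sumr hip) big1 // => s hs.
by rewrite (ip_sumr hip) big1 // => j _; rewrite (ipZr hip) h // mulr0.
Qed.

Lemma span_pick (A : {set 'Z_N}) u i : u \in A -> in_span y A (y u i).
Proof.
move=> hu; exists (fun s j => ((s == u) && (j == i))%:R); apply: esym.
rewrite (bigD1 u) //= [X in _ + X]big1 ?addr0; last first.
  move=> s /andP[_ /negbTE ->]; apply: big1 => j _; by rewrite /= mulr0n scale0r.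
rewrite (bigD1 i) //= !eqxx [X in _ + X]big1 ?addr0 ?scale1r // => j /negbTE ->.
by rewrite scale0r.
Qed.

Lemma span_opp (A : {set 'Z_N}) w : in_span y A w -> in_span y A (- w).
Proof.
case=> c ->; exists (fun s j => - c s j); rewrite -sumrN; apply: eq_bigr => s _.
by rewrite -sumrN; apply: eq_bigr => j _; rewrite scaleNr.
Qed.


Lemma zN k : ((k%:Z)%:~R : 'Z_N) = k%:R. Proof. by []. Qed.

Lemma sum_pair (I J : finType) (F : I * J -> H) :
  \sum_p F p = \sum_i \sum_j F (i, j).
Proof. by rewrite pair_bigA; apply: eq_bigr => -[a b]. Qed.

Definition I0 := ((bool * 'I_n.+1) * 'I_m)%type.
Definition f0 (x : I0) : H :=
  if x.1.1 then y (0 + (((val x.1.2).+1)%:Z)%:~R) x.2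
  else y (0 - (((val x.1.2).+1)%:Z)%:~R) x.2.
Definition mkF (cc : 'I_m -> I0 -> R) : int -> 'M[R]_m := fun z =>
  \matrix_(i, j) match z with
    | Posz k => - cc i ((false, inord k.-1), j)
    | Negz k => - cc i ((true, inord k), j) end.

Lemma mkFp cc (k : nat) i j : mkF cc (k.+1)%:Z i j = - cc i ((false, inord k), j).
Proof. by rewrite /mkF mxE. Qed.
Lemma mkFn cc (k : nat) i j : mkF cc (- (k.+1)%:Z) i j = - cc i ((true, inord k), j).
Proof. by rewrite /mkF mxE -NegzE. Qed.

Lemma mkF_sum cc i : \sum_x cc i x *: f0 x = - wsum (mkF cc) 0 i.
Proof.
rewrite /wsum big_add1 /= big_mkord.
rewrite (eq_bigr (fun k : 'I_n.+1 => - (\sum_(j < m) (cc i (false, k, j) *: y (0 - ((k.+1)%:Z)%:~R) j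
   + cc i (true, k, j) *: y (0 + ((k.+1)%:Z)%:~R) j)))); last first.
  move=> k _; rewrite -sumrN; apply: eq_bigr => j _.
  by rewrite mkFp mkFn inord_val !scaleNr opprD.
rewrite sumrN opprK sum_pair sum_pair big_bool /= addrC -big_split /=.
by apply: eq_bigr => k _; rewrite -big_split.
Qed.

Hypothesis hrec : reciprocal ip y n.+1.

Lemma part1 : exists F, forall t, represents ip y n.+1 F t.
Proof.
have hc : forall i, {c : I0 -> R | forall x', ip (y 0 i - \sum_x c x *: f0 x) (f0 x') = 0}.
  move=> i; apply: constructive_indefinite_description.
  have [c hc] := proj_ex hip f0 setT (y 0 i).
  exists c => x'; have := hc x' (in_setT _).
  have -> // : \sum_(x in [set: I0]) c x *: f0 x = \sum_x c x *: f0 x.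
  by apply: eq_bigl => x; rewrite in_setT.
pose cc i := proj1_sig (hc i).
exists (mkF cc).
set F := mkF cc.
have orth0 : forall i x', ip (y 0 i + wsum F 0 i) (f0 x') = 0.
  by move=> i x'; have := proj2_sig (hc i) x'; rewrite (mkF_sum cc i) opprK.
have orthW : forall t i (k : nat) j', (1 <= k <= n.+1)%N ->
    ip (y t i + wsum F t i) (y (t - (k%:Z)%:~R) j') = 0 /\
    ip (y t i + wsum F t i) (y (t + (k%:Z)%:~R) j') = 0.
  move=> t i [|k] // j' hk; split.
    rewrite (wsum_shift _ _ _ (- _)).
    by have := orth0 i ((false, inord k), j'); rewrite /f0 /= inordK // sub0r.
  rewrite (wsum_shift _ _ _ ((k.+1)%:Z)%:~R).
  by have := orth0 i ((true, inord k), j'); rewrite /f0 /= inordK // add0r.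
move=> t i.
set B := cyc_bdry n.+1 (t - 1) (t + 1).
have memB : forall k, (1 <= k < n.+2)%N ->
    (t - (k%:Z)%:~R \in B) && (t + (k%:Z)%:~R \in B).
  move=> [|k] // hk; have hk' : (k < n.+1)%N by lia.
  apply/andP; split; rewrite inE; apply/existsP; exists (Ordinal hk'); apply/orP.
    by left; apply/eqP; rewrite /= zN mulrSr; ring.
  by right; apply/eqP; rewrite /= zN mulrSr; ring.
have hB : forall s', s' \in B -> forall j, ip (y t i + wsum F t i) (y s' j) = 0.
  move=> s' /[!inE] /existsP [k /orP [/eqP -> | /eqP ->]] j.
    have -> : t - 1 - (val k)%:R = t - (((val k).+1)%:Z)%:~R by rewrite zN mulrSr; ring.
    by case: (orthW t i (val k).+1 j) => //; rewrite ltnS ltn_ord.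
  have -> : t + 1 + (val k)%:R = t + (((val k).+1)%:Z)%:~R by rewrite zN mulrSr; ring.
  by case: (orthW t i (val k).+1 j) => //; rewrite ltnS ltn_ord.
have hpa : is_proj ip y B (y t i) (- wsum F t i).
  split; first by apply: span_opp; exists (gc F t i); apply: esym; apply: gather.
  by move=> s' hs' j; rewrite opprK; apply: hB.
split.
  apply: span_opp; exists (gc F t i); apply: esym; apply: gather => k hk.
  rewrite !inE !zN win_m0 ?win_p0 //; lia.
move=> s hs j'.
case: (boolP (s \in B)) => hsB; first by rewrite opprK; apply: hB.
have e1 : t - (t - 1) = 1%:R by ring.
have e2 : t + 1 - (t - 1) = 2%:R by ring.
have ht : t \in cyc_open (t - 1) (t + 1).
  rewrite inE e1 e2 !znat_val //; lia.
have hs' : s \in ~: cyc_open (t - 1) (t + 1).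
  rewrite !inE e2 znat_val; last by lia.
  apply/negP => /andP[h0 h2].
  have h1 : val (s - (t - 1)) = 1%N by lia.
  have e : s - (t - 1) = 1%:R by apply: val_inj; rewrite h1 znat_val //; lia.
  have est : s = t by move/eqP: e; rewrite subr_eq => /eqP ->; ring.
  by move: hs; rewrite inE est eqxx.
have [c' hc'] := proj_ex hip (fun p : 'Z_N * 'I_m => y p.1 p.2) [set p | p.1 \in B] (y s j').
set pb := \sum_(p in [set p | p.1 \in B]) c' p *: y p.1 p.2 in hc'.
have hpb : is_proj ip y B (y s j') pb.
  split.
    exists (fun s j => c' (s, j)).
    rewrite (pair_big_dep (fun s => s \in B) (fun _ _ => true) (fun s j => c' (s, j) *: y s j)) /=.
    by apply: eq_big => [p|p _]; [rewrite inE andbT | case: p].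
  by move=> s'' hs'' j; apply: (hc' (s'', j)); rewrite inE.
have := hrec (span_pick i ht) (span_pick j' hs') hpa hpb.
have hp0 : ip (y t i - - wsum F t i) pb = 0.
  by apply: (span_orth (A := B)); [move=> s'' hs'' j; apply: hpa.2 | case: hpb].
by rewrite (ipBr hip) hp0 subr0.
Qed.


Definition dat : int -> 'M[R]_m :=
  fun j => if (0 <= j <= (2 * n.+1)%N%:Z) then Sigma ip y j else 0.

Definition Gm (S : int -> 'M[R]_m) (a l : int) (j j' : 'I_m) : R :=
  if l <= a then S (a - l) j j' else S (l - a) j' j.

Definition NEx (S : int -> 'M[R]_m) (G : int -> 'M[R]_m) (i : 'I_m) (l : int) (j' : 'I_m) : R :=
  Gm S 0 l i j' + \sum_(1 <= k < n.+2) \sum_(j < m)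
    (G (k%:Z) i j * Gm S (- (k%:Z)) l j j' + G (- (k%:Z)) i j * Gm S (k%:Z) l j j').

Definition Good (S : int -> 'M[R]_m) (G : int -> 'M[R]_m) : Prop :=
  forall i j' (l : int), l != 0 -> - (n.+1)%:Z <= l <= (n.+1)%:Z -> NEx S G i l j' = 0.

Lemma Gm_ok t (a l : int) j j' : - (n.+1)%:Z <= a <= (n.+1)%:Z ->
  - (n.+1)%:Z <= l <= (n.+1)%:Z ->
  ip (y (t + a%:~R) j) (y (t + l%:~R) j') = Gm dat a l j j'.
Proof.
move=> ha hl; rewrite /Gm /dat; case: leP => hla.
  rewrite ifT; last by lia.
  rewrite mxE; have := hst (t + l%:~R) 0 ((a - l)%:~R) j j'; rewrite add0r.
  have -> // : t + l%:~R + (a - l)%:~R = t + a%:~R by rewrite intrB; ring.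
rewrite ifT; last by lia.
rewrite mxE (ipC hip); have := hst (t + a%:~R) 0 ((l - a)%:~R) j' j; rewrite add0r.
have -> // : t + a%:~R + (l - a)%:~R = t + l%:~R by rewrite intrB; ring.
Qed.

Lemma NE_ok G t i (l : int) j' : - (n.+1)%:Z <= l <= (n.+1)%:Z ->
  ip (y t i + wsum G t i) (y (t + l%:~R) j') = NEx dat G i l j'.
Proof.
move=> hl; rewrite wsum_ip /NEx; congr (_ + _).
  by rewrite -(@Gm_ok t 0 l i j') ?mulr0z ?addr0 //; lia.
apply: eq_big_nat => k hk; apply: eq_bigr => j _.
rewrite -(@Gm_ok t (- (k%:Z)) l j j'); [|lia|lia].
by rewrite -(@Gm_ok t (k%:Z) l j j') ?intrN //; lia.
Qed.

Lemma tl_neq (t : 'Z_N) (l : int) : l != 0 -> - (n.+1)%:Z <= l <= (n.+1)%:Z ->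
  (t + l%:~R == t) = false.
Proof.
case: l => k hl hb.
  by rewrite zN win_p0 //; lia.
by rewrite NegzE intrN zN win_m0 //; rewrite NegzE in hb; lia.
Qed.

Lemma good_of_rep F t : represents ip y n.+1 F t -> Good dat F.
Proof.
move=> hr i j' l hl hb; rewrite -(NE_ok F t i j' hb).
have [_ ho] := hr i; have := ho (t + l%:~R) _ j'; rewrite opprK; apply.
by rewrite inE tl_neq.
Qed.

Lemma wsumB G1 G2 t i : wsum G1 t i - wsum G2 t i = wsum (fun z => G1 z - G2 z) t i.
Proof.
rewrite /wsum -sumrB; apply: eq_bigr => k _; rewrite -sumrB; apply: eq_bigr => j _.
by rewrite !mxE !scalerBl opprD addrACA.
Qed.

Lemma quad_ip (c : 'Z_N -> 'I_m -> R) :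
  \sum_(s : 'Z_N) \sum_(i < m) \sum_(u : 'Z_N) \sum_(j < m)
     c s i * ip (y s i) (y u j) * c u j
  = ip (\sum_(s : 'Z_N) \sum_(i < m) c s i *: y s i)
       (\sum_(s : 'Z_N) \sum_(i < m) c s i *: y s i).
Proof.
rewrite (ip_suml hip); apply: eq_bigr => s _; rewrite (ip_suml hip); apply: eq_bigr => i _.
rewrite (ipZl hip) (ip_sumr hip) mulr_sumr; apply: eq_bigr => u _.
rewrite (ip_sumr hip) mulr_sumr; apply: eq_bigr => j _.
by rewrite (ipZr hip) [c u j * _]mulrC mulrA.
Qed.

Lemma uniq_coef (hfr : full_rank ip y) F F' (t : 'Z_N) : Good dat F -> Good dat F' ->
  forall k, (1 <= k <= n.+1)%N -> F (k%:Z) = F' (k%:Z) /\ F (- (k%:Z)) = F' (- (k%:Z)).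
Proof.
move=> g1 g2.
suff hz : forall i j k, (1 <= k <= n.+1)%N ->
    F (k%:Z) i j - F' (k%:Z) i j = 0 /\ F (- (k%:Z)) i j - F' (- (k%:Z)) i j = 0.
  move=> k hk; split; apply/matrixP => i j; apply/eqP; rewrite -subr_eq0;
    case: (hz i j k hk) => h1 h2; [rewrite h1 | rewrite h2] => //.
move=> i j k hk.
pose D := fun z => F z - F' z.
set d := wsum D t i.
have hd : forall (l : int) j', l != 0 -> - (n.+1)%:Z <= l <= (n.+1)%:Z ->
    ip d (y (t + l%:~R) j') = 0.
  move=> l j' hl hb; rewrite /d /D -wsumB.
  have -> : wsum F t i - wsum F' t i = (y t i + wsum F t i) - (y t i + wsum F' t i).
    by rewrite opprD addrACA subrr add0r.
  by rewrite (ipBl hip) !NE_ok // g1 // g2 // subrr.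
have hdd : ip d d = 0.
  rewrite {2}/d /wsum (ip_sumr hip) big_nat_cond big1 // => k' /andP[hk' _].
  rewrite (ip_sumr hip) big1 // => j' _; rewrite (ipDr hip) !(ipZr hip).
  have h1 : ip d (y (t - (k'%:Z)%:~R) j') = 0.
    by have := hd (- (k'%:Z)) j'; rewrite intrN; apply; lia.
  by rewrite h1 hd ?mulr0 ?addr0 //; lia.
pose c := gc D t i.
have hv : \sum_(s : 'Z_N) \sum_(j < m) c s j *: y s j = d.
  rewrite /d -(gather (A := [set: 'Z_N])) => [|k' _]; last by rewrite !in_setT.
  by apply: eq_bigl => s; rewrite in_setT.
have hc0 : forall s j, c s j = 0.
  move=> s j'; apply/eqP; apply: contraT => hne.
  have := @hfr c (ex_intro _ s (ex_intro _ j' hne)).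
  by rewrite quad_ip hv hdd ltxx.
have hkr : k \in index_iota 1 n.+2 by rewrite mem_index_iota; lia.
have hu : uniq (index_iota 1 n.+2) by apply: iota_uniq.
split.
  have := hc0 (t - (k%:Z)%:~R) j; rewrite /c /gc (bigD1_seq k) //= !zN eqxx win_mp; last by lia.
  rewrite big1_seq ?addr0 ?mul1r ?mul0r ?addr0 /D ?mxE //.
  move=> k' /andP[hk' hin]; rewrite mem_index_iota in hin.
  rewrite !zN win_mm; [|lia|lia]; rewrite win_mp; last by lia.
  by rewrite eq_sym (negbTE hk') !mul0r addr0.
have := hc0 (t + (k%:Z)%:~R) j; rewrite /c /gc (bigD1_seq k) //= !zN eqxx.
rewrite eq_sym win_mp; last by lia.
rewrite big1_seq ?mul1r ?mul0r ?add0r ?addr0 /D ?mxE //.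
move=> k' /andP[hk' hin]; rewrite mem_index_iota in hin.
rewrite !zN win_pp; [|lia|lia]; rewrite (eq_sym (t + k%:R)) win_mp; last by lia.
by rewrite eq_sym (negbTE hk') !mul0r addr0.
Qed.

End Proc.

Theorem lemma1 (R : realType) (m n N : nat) :
  (1 <= m)%N -> (1 <= n)%N -> (2 * n < N)%N ->
  (* the coefficients can be taken independent of t *)
  (forall (H : lmodType R) (ip : H -> H -> R) (y : 'Z_N -> 'I_m -> H),
     semi_inner ip -> stationary ip y -> reciprocal ip y n ->
     exists F : int -> 'M[R]_m, forall t : 'Z_N, represents ip y n F t)
  /\
  (* full rank: unique, t-independent, and a function of Sigma_0..Sigma_2n *)
  (exists Phi : (int -> 'M[R]_m) -> int -> 'M[R]_m,
     forall (H : lmodType R) (ip : H -> H -> R) (y : 'Z_N -> 'I_m -> H),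
       semi_inner ip -> stationary ip y -> reciprocal ip y n -> full_rank ip y ->
       forall (t : 'Z_N) (F : int -> 'M[R]_m), represents ip y n F t ->
         forall k : int, k != 0 -> - (n%:Z) <= k <= n%:Z ->
           F k = Phi (fun j : int => if (0 <= j <= (2 * n)%N%:Z) then Sigma ip y j else 0) k).

Proof.
move=> hm hn hN; case: n hn hN => [//|n] _ hN; split.
  by move=> H ip y hip hst hrec; apply: (part1 hip hN hst hrec).
exists (fun S => epsilon (inhabits (fun _ : int => (0 : 'M[R]_m))) (Good n S)).
move=> H ip y hip hst hrec hfr t F hrep k hk0 hkb.
have g1 := good_of_rep hip hN hst hrep.
have g2 := epsilon_spec (inhabits (fun _ : int => (0 : 'M[R]_m))) (Good n (dat ip n y))
  (ex_intro _ F g1).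
have hu := uniq_coef hip hN hst hfr t g1 g2.
case: k hk0 hkb => k hk0 hkb.
  have hk : (0 < k <= n.+1)%N by lia.
  by case: (hu k hk) => h1 h2; exact: h1.
rewrite NegzE in hkb *.
have hk : (0 < k.+1 <= n.+1)%N by lia.
by case: (hu k.+1 hk) => h1 h2; exact: h2.
Qed.
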